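(* Let $R$ be a commutative ring and let $x\in R[[t]]$ admit a strict Weierstrass factorization. Then for every ring homomorphism $R\to R'$, the canonical map $$(R[[t]]/(x))\otimes_R R'\to R'[[t]]/(x)$$ is an isomorphism, where on the right $x$ denotes the image of $x$ in $R'[[t]]$.
   Context: A strict Weierstrass factorization of $x\in R[[t]]$ is an expression $x=uq$ with $u\in R[[t]]^\times$ and $q\in R[t]$ a monic polynomial such that $t^n\in qR[[t]]$ for some $n\in\mathbb{N}$. $(x)$ denotes the ideal generated by $x$. *)

(* Defs.v *)
(* Formal power series R[[t]] are represented by their
   coefficient sequences  nat -> R ; ring operations are defined explicitly. *)
From HB Require Import structures.
From mathcomp Require Import all_boot all_order all_algebra.
Set Implicit Arguments. Unset Strict Implicit. Unset Printing Implicit Defensive.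
Import GRing.Theory.
Local Open Scope ring_scope.

Definition ps_mul (R : pzSemiRingType) (f g : nat -> R) : nat -> R :=
  fun n => \sum_(i < n.+1) f i * g (n - i)%N.

Definition ps_one (R : pzSemiRingType) : nat -> R :=
  fun n => if n == 0%N then 1 else 0.
Definition ps_tpow (R : pzSemiRingType) (k : nat) : nat -> R :=
  fun n => if n == k then 1 else 0.

Definition ps_unit (R : pzSemiRingType) (u : nat -> R) : Prop :=
  exists v : nat -> R, forall n, ps_mul u v n = ps_one R n.

Definition ps_monic_poly (R : pzSemiRingType) (q : nat -> R) : Prop :=
  exists d : nat, q d = 1 /\ forall n, (d < n)%N -> q n = 0.

Definition ps_in_ideal (R : pzSemiRingType) (x f : nat -> R) : Prop :=
  exists g : nat -> R, forall n, f n = ps_mul x g n.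

Definition ps_cong (R : pzRingType) (x f f' : nat -> R) : Prop :=
  ps_in_ideal x (fun n => f n - f' n).

Definition strict_weierstrass (R : pzSemiRingType) (x : nat -> R) : Prop :=
  exists (u q : nat -> R),
    [/\ ps_unit u, ps_monic_poly q, (forall n, x n = ps_mul u q n) &
        exists k : nat, ps_in_ideal q (ps_tpow R k)].

(* The tensor product is characterized by its universal property: the map is an
   isomorphism iff the R-bilinear map
      R[[t]]/(x) * R' -> R'[[t]]/(phi x),  ([a], r) |-> [r * phi(a)]
   is universal among R-bilinear maps into R-modules M
   (R' and R'[[t]]/(phi x) being R-modules via phi). *)
Definition base_change_iso (R R' : comPzRingType) (phi : {rmorphism R -> R'})
    (x : nat -> R) : Prop :=
  let can (a : nat -> R) (r : R') : nat -> R' := fun n => r * phi (a n) in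
  let xphi : nat -> R' := fun n => phi (x n) in
  forall (M : lmodType R) (B : (nat -> R) -> R' -> M),
    (forall a a' r, B (fun n => a n + a' n) r = B a r + B a' r) ->
    (forall a r r', B a (r + r') = B a r + B a r') ->
    (forall c a r, B (fun n => c * a n) r = c *: B a r) ->
    (forall c a r, B a (phi c * r) = c *: B a r) ->
    (forall a a' r, ps_cong x a a' -> B a r = B a' r) ->
    let good (h : (nat -> R') -> M) :=
      [/\ forall f f', h (fun n => f n + f' n) = h f + h f',
          forall c f, h (fun n => phi c * f n) = c *: h f,
          forall f f', ps_cong xphi f f' -> h f = h f' &
          forall a r, h (can a r) = B a r] in
    (exists h, good h) /\
    (forall h1 h2, good h1 -> good h2 -> forall f, h1 f = h2 f).

(* Main.v *)
Require Import Defs.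
From mathcomp Require Import all_boot all_order all_algebra.
From Stdlib Require Import FunctionalExtensionality.
Set Implicit Arguments. Unset Strict Implicit. Unset Printing Implicit Defensive.
Import GRing.Theory.
Local Open Scope ring_scope.


Section PS.
Variable S : comPzRingType.
Implicit Types f g h : nat -> S.

Lemma kron_sum (F : nat -> S) (n K : nat) :
  \sum_(i < K) (if n == (i : nat) then F i else 0) = if (n < K)%N then F n else 0.
Proof.
elim: K => [|K IH]; first by rewrite big_ord0.
rewrite big_ord_recr /= IH ltnS.
by case: (ltngtP n K) => [lt|gt|->]; rewrite ?addr0 ?add0r.
Qed.

Lemma ps_mul_tpowl k g n :
  ps_mul (ps_tpow S k) g n = if (k <= n)%N then g (n - k)%N else 0.
Proof.
rewrite /ps_mul /ps_tpow.
rewrite (eq_bigr (fun i : 'I_n.+1 => if k == i then g (n - i)%N else 0)).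
  by rewrite (kron_sum (fun i => g (n - i)%N)) ltnS.
by move=> i _; rewrite eq_sym; case: eqP; rewrite ?mul1r ?mul0r.
Qed.

Lemma ps_mulC f g : ps_mul f g = ps_mul g f.
Proof.
apply: functional_extensionality => n; rewrite /ps_mul.
rewrite (reindex_inj rev_ord_inj) /=.
apply: eq_bigr => i _; rewrite mulrC subSS subKn //.
by rewrite -ltnS.
Qed.

Lemma ps_mul1 f : ps_mul f (ps_one S) = f.
Proof.
apply: functional_extensionality => n.
by rewrite ps_mulC (ps_mul_tpowl 0) subn0.
Qed.

Lemma ps_mulA f g h : ps_mul (ps_mul f g) h = ps_mul f (ps_mul g h).
Proof.
apply: functional_extensionality => n; rewrite /ps_mul.
under eq_bigr do rewrite mulr_suml.
under [RHS]eq_bigr do rewrite mulr_sumr.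
rewrite -(big_mkord (fun _ => true) (fun i => \sum_(j < i.+1) f j * g (i - j)%N * h (n - i)%N)).
rewrite (@eq_big_nat _ _ _ 0 n.+1 _ (fun i => \sum_(0 <= j < n.+1 | true && (j < i.+1)%N) f j * g (i - j)%N * h (n - i)%N)); last first.
  by move=> i /andP[_ hi]; rewrite -(big_mkord (fun _ => true) (fun j => f j * g (i - j)%N * h (n - i)%N)) (@big_nat_widen _ _ _ 0 i.+1 n.+1).
rewrite (exchange_big_dep_nat xpredT) //=.
rewrite -(big_mkord (fun _ => true) (fun j => \sum_(i < (n - j).+1) f j * (g i * h (n - j - i)%N))).
apply: eq_big_nat => j /andP[_ jn].
rewrite (eq_bigl (fun i => (j <= i)%N)); last by move=> i; rewrite ltnS.
transitivity (\sum_(j <= i < n.+1) f j * g (i - j)%N * h (n - i)%N).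
  by rewrite [RHS]big_geq_mkord big_geq_mkord; apply: eq_bigl => i /=; rewrite andbT.
rewrite -{1}(add0n j) big_addn.
rewrite -(big_mkord (fun _ => true) (fun i => f j * (g i * h (n - j - i)%N))).
rewrite subSn //.
apply: eq_big_nat => l _.
by rewrite addnK mulrA -!subnDA addnC.
Qed.

Lemma ps_mul_addr f g h : ps_mul f (fun n => g n + h n) = fun n => ps_mul f g n + ps_mul f h n.
Proof.
apply: functional_extensionality => n; rewrite /ps_mul -big_split /=.
by apply: eq_bigr => i _; rewrite mulrDr.
Qed.

Lemma ps_mul_oppr f g : ps_mul f (fun n => - g n) = fun n => - ps_mul f g n.
Proof.
apply: functional_extensionality => n; rewrite /ps_mul -sumrN.
by apply: eq_bigr => i _; rewrite mulrN.
Qed.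

Lemma ps_mul0r f : ps_mul f (fun _ => 0) = fun _ => 0.
Proof.
apply: functional_extensionality => n; rewrite /ps_mul big1 // => i _; by rewrite mulr0.
Qed.


End PS.

Lemma tail_ideal (S : comPzRingType) (x w : nat -> S) k :
  ps_mul x w = ps_tpow S k ->
  forall f, (forall n, (n < k)%N -> f n = 0) -> ps_in_ideal x f.
Proof.
move=> Hw f Hf; exists (ps_mul w (fun n => f (n + k)%N)) => n.
rewrite -ps_mulA Hw ps_mul_tpowl.
case: leqP => [le|lt]; first by rewrite subnK.
by rewrite Hf.
Qed.

Lemma kron_sum1 (S : comPzRingType) (F : nat -> S) (n K : nat) :
  \sum_(i < K) F i * ps_tpow S i n = if (n < K)%N then F n else 0.
Proof.
rewrite -kron_sum; apply: eq_bigr => i _; rewrite /ps_tpow.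
by case: eqP; rewrite ?mulr1 ?mulr0.
Qed.

Lemma kron_sum2 (S : comPzRingType) (F : nat -> S) (n K : nat) :
  \sum_(i < K) ps_tpow S i n * F i = if (n < K)%N then F n else 0.
Proof.
rewrite -kron_sum1; apply: eq_bigr => i _; by rewrite mulrC.
Qed.

Lemma weier_tk (R : comPzRingType) (x : nat -> R) :
  strict_weierstrass x -> exists w k, ps_mul x w = ps_tpow R k.
Proof.
move=> [u [q [[v Hv] _ Hx [k [g Hg]]]]].
have Hx' : x = ps_mul u q by apply: functional_extensionality.
have Hg' : ps_tpow R k = ps_mul q g by apply: functional_extensionality.
have Hv' : ps_mul u v = ps_one R by apply: functional_extensionality.
exists (ps_mul v g), k.
rewrite Hx' ps_mulA -(ps_mulA q) (ps_mulC q v) ps_mulA -ps_mulA Hv' -Hg'.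
by rewrite ps_mulC ps_mul1.
Qed.

Lemma dbl0 (V : zmodType) (a : V) : a = a + a -> a = 0.
Proof. by move=> H; apply: (addrI a); rewrite addr0 -H. Qed.

Section Main.
Variables (R R' : comPzRingType) (phi : {rmorphism R -> R'}) (x w : nat -> R) (k : nat).
Hypothesis Hw : ps_mul x w = ps_tpow R k.
Let xphi : nat -> R' := fun n => phi (x n).

Lemma phi_mul (a b : nat -> R) :
  (fun n => phi (ps_mul a b n)) = ps_mul (fun n => phi (a n)) (fun n => phi (b n)).
Proof.
apply: functional_extensionality => n; rewrite /ps_mul rmorph_sum.
by apply: eq_bigr => i _; rewrite rmorphM.
Qed.

Lemma Hw' : ps_mul xphi (fun n => phi (w n)) = ps_tpow R' k.
Proof.
rewrite /xphi -phi_mul Hw; apply: functional_extensionality => n.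
by rewrite /ps_tpow; case: eqP; rewrite ?rmorph1 ?rmorph0.
Qed.

Variables (M : lmodType R) (B : (nat -> R) -> R' -> M).
Hypothesis HB1 : forall a a' r, B (fun n => a n + a' n) r = B a r + B a' r.
Hypothesis HB2 : forall a r r', B a (r + r') = B a r + B a r'.
Hypothesis HB3 : forall c a r, B (fun n => c * a n) r = c *: B a r.
Hypothesis HB4 : forall c a r, B a (phi c * r) = c *: B a r.
Hypothesis HB5 : forall a a' r, ps_cong x a a' -> B a r = B a' r.

Lemma B0l r : B (fun _ => 0) r = 0.
Proof.
have := HB1 (fun _ => 0) (fun _ => 0) r.
have -> : (fun _ : nat => 0 + 0 : R) = (fun _ => 0) by apply: functional_extensionality => n; rewrite addr0.
exact: dbl0.
Qed.

Lemma B0r a : B a 0 = 0.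
Proof.
have := HB2 a 0 0; rewrite addr0.
exact: dbl0.
Qed.

Lemma Bsum1 K (F : nat -> nat -> R) r :
  B (fun n => \sum_(m < K) F m n) r = \sum_(m < K) B (F m) r.
Proof.
elim: K => [|K IH].
  rewrite big_ord0 -(B0l r); congr B; apply: functional_extensionality => n.
  by rewrite big_ord0.
rewrite big_ord_recr /= -IH -HB1; congr B; apply: functional_extensionality => n.
by rewrite big_ord_recr.
Qed.

Lemma Bsum2 K (G : nat -> R') a :
  B a (\sum_(m < K) G m) = \sum_(m < K) B a (G m).
Proof.
elim: K => [|K IH]; first by rewrite !big_ord0 B0r.
by rewrite !big_ord_recr /= HB2 IH.
Qed.

Definition can (a : nat -> R) (r : R') : nat -> R' := fun n => r * phi (a n).

Definition good (h : (nat -> R') -> M) :=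
      [/\ forall f f', h (fun n => f n + f' n) = h f + h f',
          forall c f, h (fun n => phi c * f n) = c *: h f,
          forall f f', ps_cong xphi f f' -> h f = h f' &
          forall a r, h (can a r) = B a r].

Definition hh (f : nat -> R') : M := \sum_(i < k) B (ps_tpow R i) (f i).

Lemma good_formula h : good h -> forall f, h f = hh f.
Proof.
move=> [H1 H2 H3 H4] f.
have h0 : h (fun _ => 0) = 0.
  have := H1 (fun _ => 0) (fun _ => 0).
  have -> : (fun _ : nat => 0 + 0 : R') = (fun _ => 0) by apply: functional_extensionality => n; rewrite addr0.
  exact: dbl0.
have hsum : forall K (F : nat -> nat -> R'), h (fun n => \sum_(m < K) F m n) = \sum_(m < K) h (F m).
  elim=> [|K IH] F.
    rewrite big_ord0 -h0; congr h; apply: functional_extensionality => n.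
    by rewrite big_ord0.
  rewrite big_ord_recr /= -IH -H1; congr h; apply: functional_extensionality => n.
  by rewrite big_ord_recr.
rewrite (H3 f (fun n => \sum_(i < k) can (ps_tpow R i) (f i) n)).
  by rewrite (hsum k (fun m => can (ps_tpow R m) (f m))) /hh; apply: eq_bigr => i _; rewrite H4.
apply: (tail_ideal Hw') => n ltn.
rewrite /can.
under eq_bigr do rewrite /ps_tpow (fun_if phi) rmorph1 rmorph0 -/(ps_tpow R' _ _).
by rewrite kron_sum1 ltn subrr.
Qed.

Lemma hh_good : good hh.
Proof.
have hadd : forall f f', hh (fun n => f n + f' n) = hh f + hh f'.
  by move=> f f'; rewrite /hh -big_split; apply: eq_bigr => i _; rewrite HB2.
have hcan : forall a r, hh (can a r) = B a r.
  move=> a r; rewrite /hh /can.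
  under eq_bigr do rewrite mulrC HB4 -HB3.
  rewrite -(Bsum1 k (fun i n => a i * ps_tpow R i n)); apply: HB5.
  apply: (tail_ideal Hw) => n ltn.
  by rewrite kron_sum1 ltn subrr.
split => //.
- move=> c f; rewrite /hh scaler_sumr; apply: eq_bigr => i _; by rewrite HB4.
- move=> f f' [g Hg].
  have -> : f = (fun n => f' n + ps_mul xphi g n).
    by apply: functional_extensionality => n; rewrite -Hg addrC subrK.
  rewrite hadd; suff -> : hh (ps_mul xphi g) = 0 by rewrite addr0.
  have -> : hh (ps_mul xphi g) = hh (fun n => \sum_(m < k) can (ps_mul x (ps_tpow R m)) (g m) n).
    rewrite /hh; apply: eq_bigr => i _; congr B.
    rewrite /can ps_mulC /ps_mul (big_ord_widen _ (fun m => g m * xphi (i - m)%N) (ltn_ord i)).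
    rewrite big_mkcond; apply: eq_bigr => m _.
    rewrite -/(ps_mul _ _ _) ps_mulC ps_mul_tpowl ltnS.
    by case: leqP; rewrite ?rmorph0 ?mulr0.
  rewrite /hh.
  under eq_bigr => i _ do rewrite (Bsum2 k (fun m => can (ps_mul x (ps_tpow R m)) (g m) i)).
  rewrite exchange_big /= big1 // => m _.
  rewrite -/(hh _) hcan -(B0l (g m)); apply: HB5.
  by exists (ps_tpow R m) => n; rewrite subr0.
Qed.

End Main.

Theorem corollary3p4 (R : comPzRingType) (x : nat -> R) :
  strict_weierstrass x ->
  forall (R' : comPzRingType) (phi : {rmorphism R -> R'}),
    base_change_iso phi x.
Proof.
move=> Hx R' phi; have [w [k Hw]] := weier_tk Hx.
move=> M B HB1 HB2 HB3 HB4 HB5 good; split.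
  eexists; exact: (hh_good Hw HB1 HB2 HB3 HB4 HB5).
move=> h1 h2 G1 G2 f.
rewrite (good_formula Hw G1).
by rewrite (good_formula Hw G2).
Qed.
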